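(* In the binary setting, for any prior $\pi\in(0,1)$ and qualities $\tfrac12\le q_2<q_1\le1$, $$U_\pi(q_1)-U_\pi(q_2)\le\bar f(v_H-v_L)^2\Big[\tfrac23(q_1^3-q_2^3)-\tfrac12(q_1^2-q_2^2)\Big],\qquad \bar f=\sup_{p\in[v_L,v_H]}f(p).$$ Consequently, if a signal of quality $q_1$ costs more than this amount above the cost of a signal of quality $q_2$, the advertiser prefers (buying only) the signal of quality $q_2$ regardless of her prior.
   Context: Binary setting: a single advertiser bids in a second-price auction; the user is of type $H$ with prior $\pi$ and $L$ otherwise, values $v_H>v_L\ge0$; the highest competing bid is independent of type with density $f$ and cdf $F$. $U_\pi(q)$ denotes the advertiser's value (expected utility with the signal minus without) for a signal $s\in\{h,\ell\}$ of quality $q$, i.e. $\Pr[s=h\mid H]=\Pr[s=\ell\mid L]=q$; without data she bids $\pi v_H+(1-\pi)v_L$ and with the signal she bids her posterior expected value. *)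

(* Defs.v *)
From Stdlib Require Import Reals Lra.
Open Scope R_scope.

(* Integrability hypothesis on the density f of the highest competing bid:
   for every value v and bid b, p |-> (v - p) f(p) is Riemann integrable on [0,b]. *)
Definition integrable_payoffs (f : R -> R) : Type :=
  forall v b : R, Riemann_integrable (fun p => (v - p) * f p) 0 b.

(* Expected utility in a second-price auction of an advertiser with value v
   bidding b: she wins iff the competing bid p < b and pays p.
   W v b = int_0^b (v - p) f(p) dp. *)
Definition W (f : R -> R) (pr : integrable_payoffs f) (v b : R) : R :=
  RiemannInt (pr v b).

Definition bid0 (vH vL pi : R) : R := pi * vH + (1 - pi) * vL.

(* Signal s in {h, l} of quality q: Pr[h|H] = Pr[l|L] = q. *)
Definition prob_h (pi q : R) : R := pi * q + (1 - pi) * (1 - q).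
Definition prob_l (pi q : R) : R := pi * (1 - q) + (1 - pi) * q.
Definition post_h (pi q : R) : R := pi * q / prob_h pi q.
Definition post_l (pi q : R) : R := pi * (1 - q) / prob_l pi q.
Definition bid_h (vH vL pi q : R) : R := post_h pi q * vH + (1 - post_h pi q) * vL.
Definition bid_l (vH vL pi q : R) : R := post_l pi q * vH + (1 - post_l pi q) * vL.

Definition EU0 f pr (vH vL pi : R) : R :=
  pi * W f pr vH (bid0 vH vL pi) + (1 - pi) * W f pr vL (bid0 vH vL pi).

(* Expected utility with the signal of quality q (joint law of type and signal). *)
Definition EUsig f pr (vH vL pi q : R) : R :=
  pi * q * W f pr vH (bid_h vH vL pi q)
  + (1 - pi) * (1 - q) * W f pr vL (bid_h vH vL pi q)
  + pi * (1 - q) * W f pr vH (bid_l vH vL pi q)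
  + (1 - pi) * q * W f pr vL (bid_l vH vL pi q).

Definition U f pr (vH vL pi q : R) : R := EUsig f pr vH vL pi q - EU0 f pr vH vL pi.

Definition Ubound (fbar vH vL q1 q2 : R) : R :=
  fbar * (vH - vL) ^ 2 *
  (2 / 3 * (q1 ^ 3 - q2 ^ 3) - 1 / 2 * (q1 ^ 2 - q2 ^ 2)).

(* Main.v *)
Require Import Defs.
From Stdlib Require Import Reals Lra.
From Coquelicot Require Import Coquelicot.
Open Scope R_scope.

Lemma RInt_lin2 (g1 g2 : R -> R) a b c1 c2 :
  ex_RInt g1 a b -> ex_RInt g2 a b ->
  RInt (fun p => c1 * g1 p + c2 * g2 p) a b = c1 * RInt g1 a b + c2 * RInt g2 a b.
Proof.
  intros H1 H2.
  pose proof (RInt_plus (fun p => scal c1 (g1 p)) (fun p => scal c2 (g2 p)) a b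
     (ex_RInt_scal _ _ _ c1 H1) (ex_RInt_scal _ _ _ c2 H2)) as E.
  assert (S1 : RInt (fun p => c1 * g1 p) a b = c1 * RInt g1 a b) by exact (RInt_scal g1 a b c1 H1).
  assert (S2 : RInt (fun p => c2 * g2 p) a b = c2 * RInt g2 a b) by exact (RInt_scal g2 a b c2 H2).
  rewrite <- S1, <- S2. exact E.
Qed.

Lemma exW f (pr : integrable_payoffs f) v x y :
  ex_RInt (fun p => (v - p) * f p) x y.
Proof.
  apply ex_RInt_Chasles with 0.
  - apply ex_RInt_swap. apply ex_RInt_Reals_1. apply pr.
  - apply ex_RInt_Reals_1. apply pr.
Qed.

Lemma RInt_W f (pr : integrable_payoffs f) v x y :
  RInt (fun p => (v - p) * f p) x y = W f pr v y - W f pr v x.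
Proof.
  unfold W. rewrite <- !RInt_Reals.
  rewrite <- (RInt_Chasles _ x 0 y) by (apply exW; auto).
  rewrite <- (opp_RInt_swap _ 0 x) by (apply exW; auto).
  unfold plus, opp; simpl. ring.
Qed.

Definition Gf f pr b := W f pr 1 b - W f pr 0 b.
Definition Hf f pr b := - W f pr 0 b.

Lemma W_lin f pr v b : W f pr v b = v * Gf f pr b - Hf f pr b.
Proof.
  unfold Gf, Hf.
  pose proof (RInt_W f pr v 0 b) as E1.
  pose proof (RInt_W f pr 1 0 b) as E2.
  pose proof (RInt_W f pr 0 0 b) as E3.
  assert (Z : forall u, W f pr u 0 = 0).
  { intro u. unfold W. rewrite <- RInt_Reals. exact (RInt_point 0 (fun p => (u - p) * f p)). }
  rewrite !Z in E1, E2, E3.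
  assert (E : RInt (fun p => (v - p) * f p) 0 b =
     v * RInt (fun p => (1 - p) * f p) 0 b + (1 - v) * RInt (fun p => (0 - p) * f p) 0 b).
  { rewrite <- RInt_lin2 by (apply exW; auto). apply RInt_ext. intros x _. change ((v - x) * f x = v * ((1 - x) * f x) + (1 - v) * ((0 - x) * f x)). ring. }
  rewrite E, E2, E3 in E1. lra.
Qed.

Lemma poly_int x y a bt fbar :
  is_RInt (fun p => (a + bt * p) * fbar) x y (fbar * (a * (y - x) + bt * (y ^ 2 - x ^ 2) / 2)).
Proof.
  assert (E : fbar * (a * (y - x) + bt * (y ^ 2 - x ^ 2) / 2) =
    minus ((fun p => fbar * (a * p + bt * p ^ 2 / 2)) y) ((fun p => fbar * (a * p + bt * p ^ 2 / 2)) x)).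
  { unfold minus, plus, opp; simpl. field. }
  rewrite E. apply (is_RInt_derive (V := R_CompleteNormedModule) (fun p => fbar * (a * p + bt * p ^ 2 / 2)) (fun p => (a + bt * p) * fbar)).
  - intros p _. auto_derive; auto. field.
  - intros p _. apply (ex_derive_continuous (V := R_CompleteNormedModule) (fun p => (a + bt * p) * fbar)). auto_derive. auto.
Qed.

Lemma seg f (pr : integrable_payoffs f) fbar x y a bt :
  (forall p, x <= p <= y -> f p <= fbar) -> x <= y ->
  0 <= a + bt * x -> 0 <= a + bt * y ->
  a * (Gf f pr y - Gf f pr x) + bt * (Hf f pr y - Hf f pr x)
  <= fbar * (a * (y - x) + bt * (y ^ 2 - x ^ 2) / 2).
Proof.
  intros Hf0 Hxy Hx Hy.
  assert (E : a * (Gf f pr y - Gf f pr x) + bt * (Hf f pr y - Hf f pr x)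
     = RInt (fun p => (a + bt * p) * f p) x y).
  { transitivity (RInt (fun p => a * ((1 - p) * f p) + (-(a+bt)) * ((0 - p) * f p)) x y).
    - rewrite RInt_lin2 by (apply exW; auto). rewrite !(RInt_W f pr). unfold Gf, Hf. ring.
    - apply RInt_ext. intros p _.
      change (a * ((1 - p) * f p) + (-(a+bt)) * ((0 - p) * f p) = (a + bt * p) * f p). ring. }
  rewrite E.
  assert (U : RInt (fun p => (a + bt * p) * fbar) x y = fbar * (a * (y - x) + bt * (y ^ 2 - x ^ 2) / 2))
    by exact (is_RInt_unique _ _ _ _ (poly_int x y a bt fbar)).
  rewrite <- U.
  apply RInt_le; [exact Hxy | | | ].
  - apply (ex_RInt_ext (V := R_NormedModule) (fun p => a * ((1 - p) * f p) + (-(a+bt)) * ((0 - p) * f p))).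
    + intros p _. change (a * ((1 - p) * f p) + (-(a+bt)) * ((0 - p) * f p) = (a + bt * p) * f p). ring.
    + exact (ex_RInt_plus (V := R_NormedModule) (fun p => scal a ((1 - p) * f p)) (fun p => scal (-(a+bt)) ((0 - p) * f p)) x y
        (ex_RInt_scal _ _ _ _ (exW f pr 1 x y)) (ex_RInt_scal _ _ _ _ (exW f pr 0 x y))).
  - exists (fbar * (a * (y - x) + bt * (y ^ 2 - x ^ 2) / 2)). exact (poly_int x y a bt fbar).
  - intros p Hp. apply Rmult_le_compat_l.
    + assert (K : (y - x) * (a + bt * p) = (y - p) * (a + bt * x) + (p - x) * (a + bt * y)) by ring.
      assert (0 <= (y - p) * (a + bt * x) + (p - x) * (a + bt * y)).
      { apply Rplus_le_le_0_compat; apply Rmult_le_pos; lra. }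
      apply (Rmult_le_reg_l (y - x)); [lra|]. rewrite Rmult_0_r, K. lra.
    + apply Hf0. lra.
Qed.

Lemma divle x p y : 0 < p -> x <= y * p -> x / p <= y.
Proof. intros Hp H. apply (Rmult_le_reg_r p); auto. unfold Rdiv. rewrite Rmult_assoc, Rinv_l; lra. Qed.

Definition cc vH vL pi := (vH - vL) * pi * (1 - pi).

Lemma facts vH vL pi q : vL < vH -> 0 < pi < 1 -> 1/2 <= q <= 1 ->
  0 < prob_h pi q /\ 0 < prob_l pi q /\
  prob_h pi q * (bid_h vH vL pi q - bid0 vH vL pi) = cc vH vL pi * (2*q-1) /\
  prob_l pi q * (bid0 vH vL pi - bid_l vH vL pi q) = cc vH vL pi * (2*q-1) /\
  vL <= bid_l vH vL pi q <= bid0 vH vL pi /\ bid0 vH vL pi <= bid_h vH vL pi q <= vH.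
Proof.
  intros HvHL Hpi Hq.
  assert (Ph : 0 < prob_h pi q) by (unfold prob_h; nra).
  assert (Pl : 0 < prob_l pi q) by (unfold prob_l; nra).
  assert (Eh : bid_h vH vL pi q = bid0 vH vL pi + cc vH vL pi * (2*q-1) / prob_h pi q).
  { unfold bid_h, post_h, bid0, cc. unfold prob_h. field. unfold prob_h in Ph; lra. }
  assert (El : bid_l vH vL pi q = bid0 vH vL pi - cc vH vL pi * (2*q-1) / prob_l pi q).
  { unfold bid_l, post_l, bid0, cc. unfold prob_l. field. unfold prob_l in Pl; lra. }
  assert (Hc : 0 <= cc vH vL pi) by (unfold cc; apply Rmult_le_pos; [apply Rmult_le_pos|]; lra).
  assert (Hd : 0 <= cc vH vL pi * (2*q-1)) by (apply Rmult_le_pos; lra).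
  assert (Hdh : 0 <= cc vH vL pi * (2*q-1) / prob_h pi q) by (unfold Rdiv; apply Rmult_le_pos; [lra| left; apply Rinv_0_lt_compat; lra]).
  assert (Hdl : 0 <= cc vH vL pi * (2*q-1) / prob_l pi q) by (unfold Rdiv; apply Rmult_le_pos; [lra| left; apply Rinv_0_lt_compat; lra]).
  split; [lra|]. split; [lra|].
  split. { rewrite Eh. field. lra. }
  split. { rewrite El. field. lra. }
  rewrite Eh, El. split; split; try lra.
  - assert (cc vH vL pi * (2*q-1) / prob_l pi q <= pi * (vH - vL)).
    { apply divle; auto. unfold cc, prob_l.
      assert (0 <= (vH - vL) * pi) by nra.
      replace (pi * (vH - vL) * (pi * (1 - q) + (1 - pi) * q) - (vH - vL) * pi * (1 - pi) * (2 * q - 1))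
        with ((vH - vL) * pi * (1 - q)) by ring.
      nra. }
    unfold bid0. lra.
  - assert (cc vH vL pi * (2*q-1) / prob_h pi q <= (1 - pi) * (vH - vL)).
    { apply divle; auto. unfold cc, prob_h.
      assert (0 <= (vH - vL) * (1 - pi)) by nra.
      nra. }
    unfold bid0. lra.
Qed.

Lemma mono vH vL pi q1 q2 : vL < vH -> 0 < pi < 1 -> 1/2 <= q2 -> q2 <= q1 -> q1 <= 1 ->
  bid_h vH vL pi q2 <= bid_h vH vL pi q1 /\ bid_l vH vL pi q1 <= bid_l vH vL pi q2.
Proof.
  intros H1 H2 H3 H4 H5.
  destruct (facts vH vL pi q1) as (Ph1 & Pl1 & Eh1 & El1 & _); try lra.
  destruct (facts vH vL pi q2) as (Ph2 & Pl2 & Eh2 & El2 & _); try lra.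
  assert (Hc : 0 <= cc vH vL pi) by (unfold cc; apply Rmult_le_pos; [apply Rmult_le_pos|]; lra).
  assert (A : forall P b x, 0 < P -> P * (b - x) = cc vH vL pi * (2*q1-1) -> b - x = cc vH vL pi * (2*q1-1) / P).
  { intros P b x HP E. rewrite <- E. field. lra. }
  assert (B : forall P b x, 0 < P -> P * (b - x) = cc vH vL pi * (2*q2-1) -> b - x = cc vH vL pi * (2*q2-1) / P).
  { intros P b x HP E. rewrite <- E. field. lra. }
  apply A in Eh1; auto. apply A in El1; auto. apply B in Eh2; auto. apply B in El2; auto.
  assert (K1 : cc vH vL pi * (2*q1-1) / prob_h pi q1 - cc vH vL pi * (2*q2-1) / prob_h pi q2
     = cc vH vL pi * (q1 - q2) / (prob_h pi q1 * prob_h pi q2)).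
  { unfold prob_h in *. field. lra. }
  assert (K2 : cc vH vL pi * (2*q1-1) / prob_l pi q1 - cc vH vL pi * (2*q2-1) / prob_l pi q2
     = cc vH vL pi * (q1 - q2) / (prob_l pi q1 * prob_l pi q2)).
  { unfold prob_l in *. field. lra. }
  assert (0 <= cc vH vL pi * (q1 - q2) / (prob_h pi q1 * prob_h pi q2)).
  { unfold Rdiv; apply Rmult_le_pos; [apply Rmult_le_pos; lra|]. left; apply Rinv_0_lt_compat, Rmult_lt_0_compat; lra. }
  assert (0 <= cc vH vL pi * (q1 - q2) / (prob_l pi q1 * prob_l pi q2)).
  { unfold Rdiv; apply Rmult_le_pos; [apply Rmult_le_pos; lra|]. left; apply Rinv_0_lt_compat, Rmult_lt_0_compat; lra. }
  lra.
Qed.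

Definition Vq vH vL pi q := (cc vH vL pi * (2*q-1))^2 / (2 * prob_h pi q)
   + (cc vH vL pi * (2*q-1))^2 / (2 * prob_l pi q).

Lemma Valg vH vL pi q1 q2 : vL < vH -> 0 < pi < 1 -> 1/2 <= q2 -> q2 <= q1 -> q1 <= 1 ->
  Vq vH vL pi q1 - Vq vH vL pi q2 <= (vH - vL)^2 * ((2*q1-1)^2 - (2*q2-1)^2) / 8.
Proof.
  intros H1 H2 H3 H4 H5.
  destruct (facts vH vL pi q1) as (Ph1 & Pl1 & _); try lra.
  destruct (facts vH vL pi q2) as (Ph2 & Pl2 & _); try lra.
  set (P1 := prob_h pi q1 * prob_l pi q1).
  set (P2 := prob_h pi q2 * prob_l pi q2).
  assert (HP1 : 0 < P1) by (apply Rmult_lt_0_compat; lra).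
  assert (HP2 : 0 < P2) by (apply Rmult_lt_0_compat; lra).
  assert (E : Vq vH vL pi q1 - Vq vH vL pi q2 =
     cc vH vL pi ^ 2 * ((2*q1-1)^2 - (2*q2-1)^2) / (8 * (P1 * P2))).
  { unfold Vq, P1, P2. unfold prob_h, prob_l in *. field. lra. }
  rewrite E. apply divle; [nra|].
  set (s := pi * (1 - pi)).
  assert (Hs : 0 <= s) by (unfold s; nra).
  assert (S1 : s <= P1).
  { assert (K : P1 - s = (pi - 1/2)^2 * (1 - (2*q1-1)^2)) by (unfold P1, s, prob_h, prob_l; field).
    assert (0 <= (pi - 1/2)^2 * (1 - (2*q1-1)^2)).
    { apply Rmult_le_pos; [apply pow2_ge_0|]. nra. }
    lra. }
  assert (S2 : s <= P2).
  { assert (K : P2 - s = (pi - 1/2)^2 * (1 - (2*q2-1)^2)) by (unfold P2, s, prob_h, prob_l; field).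
    assert (0 <= (pi - 1/2)^2 * (1 - (2*q2-1)^2)).
    { apply Rmult_le_pos; [apply pow2_ge_0|]. nra. }
    lra. }
  assert (SS : s * s <= P1 * P2) by (apply Rmult_le_compat; lra).
  assert (Ec : cc vH vL pi = (vH - vL) * s) by (unfold cc, s; ring).
  rewrite Ec.
  set (Ed := (2*q1-1)^2 - (2*q2-1)^2).
  assert (HE : 0 <= Ed) by (unfold Ed; nra).
  assert (HD : 0 <= (vH - vL)^2 * Ed) by (apply Rmult_le_pos; [apply pow2_ge_0|auto]).
  replace (((vH - vL) * s) ^ 2 * Ed) with ((vH - vL)^2 * Ed * (s * s)) by ring.
  replace ((vH - vL) ^ 2 * Ed / 8 * (8 * (P1 * P2))) with ((vH - vL)^2 * Ed * (P1 * P2)) by field.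
  apply Rmult_le_compat_l; auto.
Qed.

Definition Uf (G H : R -> R) vH vL pi q :=
  prob_h pi q * (bid_h vH vL pi q * (G (bid_h vH vL pi q) - G (bid0 vH vL pi))
                 - (H (bid_h vH vL pi q) - H (bid0 vH vL pi)))
  + prob_l pi q * (bid_l vH vL pi q * (G (bid_l vH vL pi q) - G (bid0 vH vL pi))
                 - (H (bid_l vH vL pi q) - H (bid0 vH vL pi))).

Lemma U_eq f pr vH vL pi q : vL < vH -> 0 < pi < 1 -> 1/2 <= q <= 1 ->
  U f pr vH vL pi q = Uf (Gf f pr) (Hf f pr) vH vL pi q.
Proof.
  intros H1 H2 H3.
  destruct (facts vH vL pi q) as (Ph & Pl & _); try lra.
  unfold U, EUsig, EU0. rewrite !W_lin. unfold Uf.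
  set (g1 := Gf f pr (bid_h vH vL pi q)).
  set (g2 := Gf f pr (bid_l vH vL pi q)).
  set (g0 := Gf f pr (bid0 vH vL pi)).
  set (h1 := Hf f pr (bid_h vH vL pi q)).
  set (h2 := Hf f pr (bid_l vH vL pi q)).
  set (h0 := Hf f pr (bid0 vH vL pi)).
  unfold bid_h, bid_l, post_h, post_l, bid0.
  unfold prob_h, prob_l in *. field. lra.
Qed.

Lemma Uf_poly vH vL pi q : vL < vH -> 0 < pi < 1 -> 1/2 <= q <= 1 ->
  Uf (fun y => y) (fun y => y ^ 2 / 2) vH vL pi q = Vq vH vL pi q.
Proof.
  intros H1 H2 H3.
  destruct (facts vH vL pi q) as (Ph & Pl & Eh & El & _); try lra.
  transitivity ((prob_h pi q * (bid_h vH vL pi q - bid0 vH vL pi))^2 / (2 * prob_h pi q)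
     + (prob_l pi q * (bid0 vH vL pi - bid_l vH vL pi q))^2 / (2 * prob_l pi q)).
  - unfold Uf. field. lra.
  - rewrite Eh, El. reflexivity.
Qed.

Lemma decomp (G H : R -> R) Ph1 Pl1 bh1 bl1 Ph2 Pl2 bh2 bl2 b0 :
  (Ph1*(bh1*(G bh1 - G b0) - (H bh1 - H b0)) + Pl1*(bl1*(G bl1 - G b0) - (H bl1 - H b0)))
  - (Ph2*(bh2*(G bh2 - G b0) - (H bh2 - H b0)) + Pl2*(bl2*(G bl2 - G b0) - (H bl2 - H b0)))
  = ((Ph1*bh1)*(G bh1 - G bh2) + (-Ph1)*(H bh1 - H bh2))
  + ((Ph1*bh1 - Ph2*bh2)*(G bh2 - G b0) + (-(Ph1-Ph2))*(H bh2 - H b0))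
  + ((-(Pl1*bl1))*(G bl2 - G bl1) + Pl1*(H bl2 - H bl1))
  + ((-(Pl1*bl1 - Pl2*bl2))*(G b0 - G bl2) + (Pl1-Pl2)*(H b0 - H bl2)).
Proof. ring. Qed.

Theorem mainTheorem16
  (f : R -> R) (pr : integrable_payoffs f)
  (f_nonneg : forall p, 0 <= p -> 0 <= f p)
  (vH vL : R) (HvL : 0 <= vL) (HvHL : vL < vH)
  (fbar : R)
  (Hfbar : is_lub (fun y => exists p, vL <= p <= vH /\ y = f p) fbar)
  (pi q1 q2 : R) (Hpi : 0 < pi < 1)
  (Hq2 : 1 / 2 <= q2) (Hq21 : q2 < q1) (Hq1 : q1 <= 1) :
  U f pr vH vL pi q1 - U f pr vH vL pi q2 <= Ubound fbar vH vL q1 q2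
  /\ (forall c1 c2 : R, c1 - c2 > Ubound fbar vH vL q1 q2 ->
        U f pr vH vL pi q2 - c2 > U f pr vH vL pi q1 - c1).
Proof.
  assert (Fb : forall p, vL <= p <= vH -> f p <= fbar).
  { intros p Hp. destruct Hfbar as [Hub _]. apply Hub. exists p; split; auto. }
  assert (Hf0 : 0 <= fbar).
  { apply Rle_trans with (f vL); [apply f_nonneg; lra | apply Fb; lra]. }
  assert (Main : U f pr vH vL pi q1 - U f pr vH vL pi q2 <= Ubound fbar vH vL q1 q2).
  { rewrite !U_eq by lra.
    destruct (facts vH vL pi q1) as (Ph1 & Pl1 & Eh1 & El1 & [Bl1 Bl1'] & [Bh1 Bh1']); try lra.
    destruct (facts vH vL pi q2) as (Ph2 & Pl2 & Eh2 & El2 & [Bl2 Bl2'] & [Bh2 Bh2']); try lra.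
    destruct (mono vH vL pi q1 q2) as [Mh Ml]; try lra.
    assert (Hc : 0 <= cc vH vL pi) by (unfold cc; apply Rmult_le_pos; [apply Rmult_le_pos|]; lra).
    assert (Hcd : 0 <= cc vH vL pi * (2*q1-1) - cc vH vL pi * (2*q2-1)).
    { replace (cc vH vL pi * (2*q1-1) - cc vH vL pi * (2*q2-1)) with (cc vH vL pi * (2*(q1-q2))) by ring.
      apply Rmult_le_pos; lra. }
    set (b0 := bid0 vH vL pi) in *.
    set (bh1 := bid_h vH vL pi q1) in *. set (bh2 := bid_h vH vL pi q2) in *.
    set (bl1 := bid_l vH vL pi q1) in *. set (bl2 := bid_l vH vL pi q2) in *.
    set (P1 := prob_h pi q1) in *. set (P2 := prob_h pi q2) in *.
    set (L1 := prob_l pi q1) in *. set (L2 := prob_l pi q2) in *.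
    assert (FB : forall x y, vL <= x -> y <= vH -> forall p, x <= p <= y -> f p <= fbar).
    { intros x y Hx Hy p Hp. apply Fb. lra. }
    assert (S1 := seg f pr fbar bh2 bh1 (P1*bh1) (-P1) (FB bh2 bh1 ltac:(lra) ltac:(lra)) Mh).
    assert (S2 := seg f pr fbar b0 bh2 (P1*bh1 - P2*bh2) (-(P1-P2)) (FB b0 bh2 ltac:(lra) ltac:(lra)) Bh2).
    assert (S3 := seg f pr fbar bl1 bl2 (-(L1*bl1)) L1 (FB bl1 bl2 ltac:(lra) ltac:(lra)) Ml).
    assert (S4 := seg f pr fbar bl2 b0 (-(L1*bl1 - L2*bl2)) (L1-L2) (FB bl2 b0 ltac:(lra) ltac:(lra)) Bl2').
    assert (N1 : 0 <= P1 * (bh1 - bh2)) by (apply Rmult_le_pos; lra).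
    assert (N2 : 0 <= L1 * (bl2 - bl1)) by (apply Rmult_le_pos; lra).
    specialize (S1 ltac:(replace (P1 * bh1 + - P1 * bh2) with (P1 * (bh1 - bh2)) by ring; lra)
                   ltac:(replace (P1 * bh1 + - P1 * bh1) with 0 by ring; lra)).
    specialize (S2 ltac:(replace (P1 * bh1 - P2 * bh2 + - (P1 - P2) * b0) with (P1 * (bh1 - b0) - P2 * (bh2 - b0)) by ring; lra)
                   ltac:(replace (P1 * bh1 - P2 * bh2 + - (P1 - P2) * bh2) with (P1 * (bh1 - bh2)) by ring; lra)).
    specialize (S3 ltac:(replace (- (L1 * bl1) + L1 * bl1) with 0 by ring; lra)
                   ltac:(replace (- (L1 * bl1) + L1 * bl2) with (L1 * (bl2 - bl1)) by ring; lra)).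
    specialize (S4 ltac:(replace (- (L1 * bl1 - L2 * bl2) + (L1 - L2) * bl2) with (L1 * (bl2 - bl1)) by ring; lra)
                   ltac:(replace (- (L1 * bl1 - L2 * bl2) + (L1 - L2) * b0) with (L1 * (b0 - bl1) - L2 * (b0 - bl2)) by ring; lra)).
    assert (DG := decomp (Gf f pr) (Hf f pr) P1 L1 bh1 bl1 P2 L2 bh2 bl2 b0).
    assert (DP := decomp (fun y => y) (fun y => y ^ 2 / 2) P1 L1 bh1 bl1 P2 L2 bh2 bl2 b0).
    assert (UP1 := Uf_poly vH vL pi q1 ltac:(lra) ltac:(lra) ltac:(lra)).
    assert (UP2 := Uf_poly vH vL pi q2 ltac:(lra) ltac:(lra) ltac:(lra)).
    unfold Uf in UP1, UP2. fold b0 bh1 bh2 bl1 bl2 P1 P2 L1 L2 in UP1, UP2.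
    cbv beta in DP.
    assert (VA := Valg vH vL pi q1 q2 ltac:(lra) ltac:(lra) ltac:(lra) ltac:(lra) ltac:(lra)).
    assert (Step1 : Uf (Gf f pr) (Hf f pr) vH vL pi q1 - Uf (Gf f pr) (Hf f pr) vH vL pi q2
        <= fbar * (Vq vH vL pi q1 - Vq vH vL pi q2)).
    { unfold Uf. fold b0 bh1 bh2 bl1 bl2 P1 P2 L1 L2. rewrite DG.
      rewrite <- UP1, <- UP2, DP.
      replace (fbar * (P1 * bh1 * (bh1 - bh2) + - P1 * (bh1 ^ 2 / 2 - bh2 ^ 2 / 2) +
        ((P1 * bh1 - P2 * bh2) * (bh2 - b0) + - (P1 - P2) * (bh2 ^ 2 / 2 - b0 ^ 2 / 2)) +
        (- (L1 * bl1) * (bl2 - bl1) + L1 * (bl2 ^ 2 / 2 - bl1 ^ 2 / 2)) +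
        (- (L1 * bl1 - L2 * bl2) * (b0 - bl2) + (L1 - L2) * (b0 ^ 2 / 2 - bl2 ^ 2 / 2))))
      with (fbar * (P1 * bh1 * (bh1 - bh2) + - P1 * (bh1 ^ 2 - bh2 ^ 2) / 2)
          + fbar * ((P1 * bh1 - P2 * bh2) * (bh2 - b0) + - (P1 - P2) * (bh2 ^ 2 - b0 ^ 2) / 2)
          + fbar * (- (L1 * bl1) * (bl2 - bl1) + L1 * (bl2 ^ 2 - bl1 ^ 2) / 2)
          + fbar * (- (L1 * bl1 - L2 * bl2) * (b0 - bl2) + (L1 - L2) * (b0 ^ 2 - bl2 ^ 2) / 2))
      by field.
      lra. }
    assert (Step2 : fbar * (Vq vH vL pi q1 - Vq vH vL pi q2)
        <= fbar * ((vH - vL) ^ 2 * ((2 * q1 - 1) ^ 2 - (2 * q2 - 1) ^ 2) / 8))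
      by (apply Rmult_le_compat_l; auto).
    assert (Step3 : Ubound fbar vH vL q1 q2 =
       fbar * ((vH - vL) ^ 2 * ((2 * q1 - 1) ^ 2 - (2 * q2 - 1) ^ 2) / 8)
       + fbar * ((vH - vL) ^ 2 * ((2 * q1 - 1) ^ 3 - (2 * q2 - 1) ^ 3) / 12))
      by (unfold Ubound; field).
    assert (C3 : (2 * q2 - 1) ^ 3 <= (2 * q1 - 1) ^ 3).
    { apply pow_incr. lra. }
    assert (0 <= fbar * ((vH - vL) ^ 2 * ((2 * q1 - 1) ^ 3 - (2 * q2 - 1) ^ 3) / 12)).
    { apply Rmult_le_pos; auto. unfold Rdiv. apply Rmult_le_pos; [|lra].
      apply Rmult_le_pos; [apply pow2_ge_0|lra]. }
    lra. }
  split; auto. intros c1 c2 Hc. lra.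
Qed.
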